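(* Let $(X,\tau_1,\tau_2)$ be a bitopological space, $i,j\in\{1,2\}$, $i\neq j$, which is $(i,j)$-almost regular, $(i,j)_1$-almost paralindelöf and a $j$-$P$-space. Then every cover $\mathcal U$ of $X$ by $(i,j)$-regular open sets has a refinement which is a cover of $X$, is $j$-locally countable, and consists of $(j,i)$-regular closed sets (sets $F$ with $F=j\text{-}\mathrm{cl}(i\text{-}\mathrm{int}(F))$).
   Context: $(X,\tau_1,\tau_2)$ is a bitopological space and $i,j\in\{1,2\}$, $i\neq j$. For $k\in\{1,2\}$, $k\text{-}\mathrm{int}$ and $k\text{-}\mathrm{cl}$ denote interior and closure with respect to $\tau_k$; ''$k$-open'' means $\tau_k$-open. A set $A$ is $(i,j)$-regular open if $A=i\text{-}\mathrm{int}(j\text{-}\mathrm{cl}(A))$. $X$ is $(i,j)$-almost regular if for each $x\in X$ and each $(i,j)$-regular open set $U$ containing $x$ there is an $(i,j)$-regular open set $V$ with $x\in V\subseteq j\text{-}\mathrm{cl}(V)\subseteq U$. A family $\mathcal V$ refines $\mathcal U$ if each member of $\mathcal V$ is contained in some member of $\mathcal U$; a family is a cover of $X$ if its union is $X$. A family is $k$-locally countable if every $x\in X$ has a $k$-open neighbourhood meeting at most countably many of its members. $X$ is a $k$-$P$-space if every intersection of countably many $k$-open sets is $k$-open. $X$ is $(i,j)_1$-almost paralindelöf if for every cover $\mathcal U$ of $X$ by $i$-open sets there is a $j$-locally countable family $\mathcal V$ of $i$-open sets refining $\mathcal U$ such that $X=\bigcup\{j\text{-}\mathrm{cl}(V):V\in\mathcal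 V\}$. *)

(* Defs.v *)
From Stdlib Require Import Classical.

Set Implicit Arguments.

Definition set (X : Type) := X -> Prop.

Record topology (X : Type) := {
  is_open : set X -> Prop;
  open_full : is_open (fun _ => True);
  open_inter : forall A B, is_open A -> is_open B -> is_open (fun x => A x /\ B x);
  open_union : forall F : set (set X), (forall A, F A -> is_open A) ->
                 is_open (fun x => exists A, F A /\ A x)
}.

Definition subset {X} (A B : set X) := forall x, A x -> B x.
Definition set_eq {X} (A B : set X) := forall x, A x <-> B x.

Definition interior {X} (t : topology X) (A : set X) : set X :=
  fun x => exists U, is_open t U /\ subset U A /\ U x.
Definition closure {X} (t : topology X) (A : set X) : set X :=
  fun x => forall F, is_open t (fun y => ~ F y) -> subset A F -> F x.

(* (i,j)-regular open, with ti = tau_i, tj = tau_j *)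
Definition regular_open {X} (ti tj : topology X) (A : set X) :=
  set_eq A (interior ti (closure tj A)).
Definition regular_closed {X} (tj ti : topology X) (F : set X) :=
  set_eq F (closure tj (interior ti F)).

Definition almost_regular {X} (ti tj : topology X) :=
  forall x U, regular_open ti tj U -> U x ->
    exists V, regular_open ti tj V /\ V x /\ subset (closure tj V) U.

Definition refines {X} (V U : set (set X)) :=
  forall B, V B -> exists A, U A /\ subset B A.

Definition covers {X} (U : set (set X)) :=
  forall x, exists A, U A /\ A x.

Definition countable {T} (S : set T) :=
  exists f : T -> nat, forall a b, S a -> S b -> f a = f b -> a = b.

Definition locally_countable {X} (t : topology X) (V : set (set X)) :=
  forall x, exists W, is_open t W /\ W x /\
    countable (fun B => V B /\ exists y, W y /\ B y).

Definition P_space {X} (t : topology X) :=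
  forall G : nat -> set X, (forall n, is_open t (G n)) ->
    is_open t (fun x => forall n, G n x).

Definition almost_paralindelof {X} (ti tj : topology X) :=
  forall U : set (set X), (forall A, U A -> is_open ti A) -> covers U ->
    exists V : set (set X),
      (forall B, V B -> is_open ti B) /\ refines V U /\ locally_countable tj V /\
      (forall x, exists B, V B /\ closure tj B x).

(* Main.v *)
Require Import Defs.
From Stdlib Require Import Classical ClassicalEpsilon FunctionalExtensionality PropExtensionality.

Lemma open_ext {X} (t : topology X) (A B : set X) :
  is_open t A -> set_eq A B -> is_open t B.
Proof.
  intros H E. replace B with A; auto.
  apply functional_extensionality; intro x; apply propositional_extensionality; apply E.
Qed.

Lemma cl_mono {X} (t : topology X) (A B : set X) : subset A B -> subset (closure t A) (closure t B).
Proof. intros H x Hx F HF HB. apply Hx; auto. intros y Hy; auto. Qed.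

Lemma cl_ext {X} (t : topology X) (A : set X) : subset A (closure t A).
Proof. intros x Hx F _ HA. auto. Qed.

Lemma cl_idem {X} (t : topology X) (A : set X) : subset (closure t (closure t A)) (closure t A).
Proof. intros x Hx F HF HA. apply Hx; auto. intros y Hy. apply Hy; auto. Qed.

Lemma int_sub {X} (t : topology X) (A : set X) : subset (interior t A) A.
Proof. intros x [U [_ [H1 H2]]]. auto. Qed.

Lemma int_open {X} (t : topology X) (A : set X) : is_open t (interior t A).
Proof.
  eapply open_ext.
  - apply (open_union t (fun U => is_open t U /\ subset U A)). intros B [HB _]; auto.
  - intro x; split.
    + intros [U [[H1 H2] H3]]. exists U; auto.
    + intros [U [H1 [H2 H3]]]. exists U; auto.
Qed.

Lemma ro_open {X} (ti tj : topology X) A : regular_open ti tj A -> is_open ti A.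
Proof.
  intro H. eapply open_ext. apply (int_open ti (closure tj A)).
  intro x; split; intro; apply H; auto.
Qed.

Lemma meet {X} (t : topology X) (W B : set X) y :
  is_open t W -> W y -> closure t B y -> exists z, W z /\ B z.
Proof.
  intros HW Wy Hc. apply NNPP; intro Hn.
  assert (Ho : is_open t (fun z => ~ ~ W z)).
  { eapply open_ext. apply HW. intro z; split; intro; auto. apply NNPP; auto. }
  specialize (Hc (fun z => ~ W z) Ho). apply Hc; auto.
  intros z Bz Wz. apply Hn. exists z; auto.
Qed.

Theorem mainTheorem13 (X : Type) (ti tj : topology X) :
  almost_regular ti tj -> almost_paralindelof ti tj -> P_space tj ->
  forall U : set (set X), (forall A, U A -> regular_open ti tj A) -> covers U ->
  exists V : set (set X),
    refines V U /\ covers V /\ locally_countable tj V /\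
    (forall F, V F -> regular_closed tj ti F).
Proof.
  intros Har Hpl _ U HU Hcov.
  set (W := fun V : set X => regular_open ti tj V /\ exists A, U A /\ subset (closure tj V) A).
  destruct (Hpl W) as [V' [HV'o [HV'r [HV'lc HV'c]]]].
  { intros A [HA _]. apply (ro_open ti tj); auto. }
  { intro x. destruct (Hcov x) as [A [HA Ax]].
    destruct (Har x A (HU A HA) Ax) as [V [HV [Vx HVA]]].
    exists V. split; auto. split; auto. exists A; auto. }
  exists (fun F => exists B, V' B /\ F = closure tj B).
  split; [|split; [|split]].
  - intros F [B [HB ->]]. destruct (HV'r B HB) as [V [[_ [A [HA HVA]]] HBV]].
    exists A. split; auto. intros x Hx. apply HVA. eapply cl_mono; eauto.
  - intro x. destruct (HV'c x) as [B [HB Hx]]. exists (closure tj B). split; eauto.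
  - intro x. destruct (HV'lc x) as [Wn [HWo [Wx [g Hg]]]].
    exists Wn. split; auto. split; auto.
    assert (inh : inhabited (set X)) by exact (inhabits (fun _ => True)).
    set (P := fun F B => V' B /\ F = closure tj B /\ exists y, Wn y /\ B y).
    exists (fun F => g (epsilon inh (P F))).
    assert (Hs : forall F, (exists B, V' B /\ F = closure tj B) /\ (exists y, Wn y /\ F y) ->
                  P F (epsilon inh (P F))).
    { intros F [[B [HB ->]] [y [Wy Fy]]]. apply epsilon_spec.
      exists B. split; auto. split; auto. eapply meet; eauto. }
    intros a b Ha Hb Heq.
    pose proof (Hs a Ha) as [A1 [A2 A3]]. pose proof (Hs b Hb) as [B1 [B2 B3]].
    rewrite A2, B2. f_equal. apply Hg; auto.
  - intros F [B [HB ->]]. intro x; split; intro Hx.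
    + eapply cl_mono; [|exact Hx]. intros y Hy. exists B. split; auto. split; auto.
      apply cl_ext.
    + apply cl_idem. eapply cl_mono; [|exact Hx]. apply int_sub.
Qed.
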